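(* Under the hypotheses of the Simultaneous Polynomial Ergodicity theorem (Assumption (A), simultaneous polynomial drift $P_\gamma V\le V-cV^\alpha+b1_C$ for all $\gamma$ with $\alpha>2/3$ and $\sup_{x\in C}V(x)<\infty$), there exists $M<\infty$ such that for the AirMCMC chain started at $(X_0,\gamma_0)$, for all $n>0$ and all $m\ge M$, $$\mathbb P_{(X_0,\gamma_0)}\big(V^{2\alpha-1}(X_n)>m\big)\le M\,V(X_0)\,\frac{\log(1+m)}{m}.$$
   Context: Assumption (A): each $P_\gamma$ is $\pi$-invariant, $\pi$-irreducible, aperiodic, and $P_\gamma(x,\cdot)\ge\delta\nu(\cdot)$ for $x\in C$, all $\gamma$, with $\pi(C)>0$. $V:\mathcal X\to[1,\infty)$, $c>0$, $b<\infty$. AirMCMC chain: $(X_n,\gamma_n)$ with $\gamma_n$ produced by an arbitrary (possibly randomised) adaptation rule from the past; with lags $n_k$, $N_0=0$, $N_j=\sum_{k\le j}n_k$, for $N_j\le n<N_{j+1}$, conditionally on the past, $X_{n+1}\sim P_{\gamma_{N_j}}(X_n,\cdot)$. $\mathbb P_{(X_0,\gamma_0)}$ is its law started at $(X_0,\gamma_0)$. *)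

(* Defs.v *)
From HB Require Import structures.
From mathcomp Require Import all_boot all_order all_algebra.
From mathcomp Require Import all_classical all_reals all_analysis measurable_realfun.
Set Implicit Arguments. Unset Strict Implicit. Unset Printing Implicit Defensive.
Import Order.TTheory GRing.Theory Num.Theory.
Import numFieldNormedType.Exports.
Local Open Scope classical_set_scope.
Local Open Scope ring_scope.

Definition kernel_family_measurable (R : realType)
  (dX dG : measure_display) (X : measurableType dX) (G : measurableType dG)
  (P : G -> X -> probability X R) : Prop :=
  forall A : set X, measurable A ->
    measurable_fun [set: X * G] (fun p : X * G => P p.2 p.1 A).

Fixpoint kpow (R : realType) (dX : measure_display) (X : measurableType dX)
  (Q : X -> probability X R) (n : nat) : X -> set X -> \bar R :=
  match n with
  | 0 => fun x A => \d_x A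
  | S k => fun x A => (\int[Q x]_y kpow Q k y A)%E
  end.

Definition invariant (R : realType) (dX : measure_display) (X : measurableType dX)
  (Q : X -> probability X R) (pi : probability X R) : Prop :=
  forall A : set X, measurable A -> pi A = (\int[pi]_x Q x A)%E.

Definition irreducible (R : realType) (dX : measure_display) (X : measurableType dX)
  (Q : X -> probability X R) (pi : probability X R) : Prop :=
  forall A : set X, measurable A -> (0 < pi A)%E ->
    forall x : X, exists n : nat, (0 < n)%N /\ (0 < kpow Q n x A)%E.

(* aperiodicity (Roberts--Rosenthal convention): there is no d >= 2 and
   pairwise disjoint measurable sets D_0, ..., D_{d-1} of positive pi-measure
   with Q(x, D_{(i+1) mod d}) = 1 for all x in D_i. *)
Definition aperiodic (R : realType) (dX : measure_display) (X : measurableType dX)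
  (Q : X -> probability X R) (pi : probability X R) : Prop :=
  ~ exists (d : nat) (D : nat -> set X),
      [/\ (2 <= d)%N,
          (forall i, (i < d)%N -> measurable (D i) /\ (0 < pi (D i))%E),
          (forall i j, (i < d)%N -> (j < d)%N -> i <> j -> D i `&` D j = set0)
        & (forall i, (i < d)%N -> forall x, D i x -> Q x (D ((i.+1) %% d)%N) = 1%E)].

Definition assumptionA (R : realType) (dX dG : measure_display)
  (X : measurableType dX) (G : measurableType dG)
  (P : G -> X -> probability X R) (pi : probability X R)
  (C : set X) (delta : R) (nu : probability X R) : Prop :=
  (forall g, invariant (P g) pi) /\
  (forall g, irreducible (P g) pi) /\
  (forall g, aperiodic (P g) pi) /\
  0 < delta /\
  (forall g x, C x -> forall A, measurable A -> ((delta%:E * nu A) <= P g x A)%E) /\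
  measurable C /\
  (0 < pi C)%E.

Definition simultaneous_poly_drift (R : realType) (dX dG : measure_display)
  (X : measurableType dX) (G : measurableType dG)
  (P : G -> X -> probability X R) (V : X -> R) (c alpha b : R) (C : set X) : Prop :=
  forall g x, (\int[P g x]_y (V y)%:E <=
               (V x - c * V x `^ alpha + b * (\1_C x : R))%:E)%E.

(* N_j = n_1 + ... + n_j (so N_0 = 0); lags n_k for k >= 1. *)
Definition Ncum (lag : nat -> nat) (j : nat) : nat := (\sum_(1 <= k < j.+1) lag k)%N.

Definition sub_sigma (dO : measure_display) (O : measurableType dO)
  (F : set (set O)) : Prop :=
  sigma_algebra setT F /\ F `<=` measurable.

Definition measurable_wrt (dO dY : measure_display) (O : measurableType dO)
  (Y : measurableType dY) (F : set (set O)) (f : O -> Y) : Prop :=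
  forall A : set Y, measurable A -> F (f @^-1` A).

(* The AirMCMC chain (X_n, gamma_n) on (Omega, Pr) with filtration F, lags
   lag, kernels P, started at (x0, g0); gamma_n is produced by an arbitrary
   (possibly randomised) rule from the past, i.e. is F_n-measurable. For
   N_j <= n < N_{j+1}, conditionally on F_n, X_{n+1} ~ P_{gamma_{N_j}}(X_n, .),
   expressed as: Pr(E /\ X_{n+1} in A) = E[1_E P_{gamma_{N_j}}(X_n, A)]
   for all E in F_n and measurable A. *)
Definition AirMCMC (R : realType) (dX dG dO : measure_display)
  (X : measurableType dX) (G : measurableType dG) (O : measurableType dO)
  (P : G -> X -> probability X R) (lag : nat -> nat)
  (Pr : probability O R) (F : nat -> set (set O))
  (Xs : nat -> O -> X) (gs : nat -> O -> G) (x0 : X) (g0 : G) : Prop :=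
  (forall n, sub_sigma (F n)) /\
  (forall n, F n `<=` F n.+1) /\
  (forall n, measurable_wrt (F n) (Xs n)) /\
  (forall n, measurable_wrt (F n) (gs n)) /\
  (forall w, Xs 0%N w = x0) /\
  (forall w, gs 0%N w = g0) /\
  (forall j n, (Ncum lag j <= n < Ncum lag j.+1)%N ->
        forall A : set X, measurable A -> forall E : set O, F n E ->
          Pr (E `&` (Xs n.+1 @^-1` A)) =
          (\int[Pr]_(w in E) P (gs (Ncum lag j) w) (Xs n w) A)%E).

(* Main.v *)
Require Import Defs.
From HB Require Import structures.
From mathcomp Require Import all_boot all_order all_algebra.
From mathcomp Require Import all_classical all_reals all_analysis measurable_realfun.
From mathcomp Require Import ring lra.
Import Order.TTheory GRing.Theory Num.Theory.
Import numFieldNormedType.Exports. Import Num.Def.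
Local Open Scope classical_set_scope.
Local Open Scope ring_scope.

Lemma powdiff (R : realType) (u w : R) n : 0 <= w -> w <= u ->
  u ^+ n.+1 - w ^+ n.+1 <= n.+1%:R * (u - w) * u ^+ n.
Proof.
move=> w0 wu; elim: n => [|n IH]; first by rewrite !expr1 expr0 mul1r mulr1.
have hw : w ^+ n.+1 <= u ^+ n.+1 by apply: lerXn2r => //; rewrite nnegrE (le_trans w0).
have u0 : 0 <= u by apply: le_trans wu.
have e1 : u ^+ n.+2 - w ^+ n.+2 = u * (u ^+ n.+1 - w ^+ n.+1) + w ^+ n.+1 * (u - w).
  by rewrite !exprS; ring.
rewrite e1.
have h1 : u * (u ^+ n.+1 - w ^+ n.+1) <= u * (n.+1%:R * (u - w) * u ^+ n).
  by apply: ler_wpM2l.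
have h2 : w ^+ n.+1 * (u - w) <= u ^+ n.+1 * (u - w).
  by apply: ler_wpM2r => //; rewrite subr_ge0.
have e2 : n.+2%:R * (u - w) * u ^+ n.+1 = u * (n.+1%:R * (u - w) * u ^+ n) + u ^+ n.+1 * (u - w).
  by rewrite (natrD _ 1 n.+1) exprS; ring.
rewrite e2; exact: lerD.
Qed.

Lemma growth (R : realType) (alpha c kap a : R) (q t : nat) :
  0 < alpha -> 1 <= a -> 0 < kap -> kap * q.+1%:R <= c ->
  q%:R <= q.+1%:R * alpha ->
  (a + kap * t.+1%:R) ^+ q.+1 - (a + kap * t%:R) ^+ q.+1
    <= c * ((a + kap * t.+1%:R) ^+ q.+1) `^ alpha.
Proof.
move=> a0 a1 k0 kc qa.
set u := a + kap * t.+1%:R; set w := a + kap * t%:R.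
have kt : 0 <= kap * t%:R by rewrite mulr_ge0 // ltW.
have w1 : 1 <= w by rewrite /w; apply: le_trans a1 _; rewrite lerDl.
have uw : u - w = kap by rewrite /u /w -addn1 natrD; ring.
have wu : w <= u by rewrite -subr_ge0 uw ltW.
have u1 : 1 <= u by apply: le_trans wu.
apply: le_trans (@powdiff R u w q (le_trans ler01 w1) wu) _.
rewrite uw.
have hq : u ^+ q <= (u ^+ q.+1) `^ alpha.
  rewrite -!powR_mulrn ?(le_trans ler01 u1) // -powRrM.
  exact: ler_powR.
have uq0 : 0 <= u ^+ q by apply: exprn_ge0; apply: le_trans u1.
rewrite (mulrC _ kap).
apply: le_trans (_ : c * u ^+ q <= _); last by apply: ler_wpM2l => //; apply: le_trans kc; rewrite mulr_ge0 // ltW.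
by apply: ler_wpM2r.
Qed.

Lemma powR_swap (R : realType) (alpha s y : R) : 0 < s -> s <= y -> 0 <= alpha <= 1 ->
  s * y `^ alpha <= s `^ alpha * y.
Proof.
move=> s0 sy /andP[a0 a1].
have y0 : 0 < y by apply: lt_le_trans sy.
have hs : s = s `^ alpha * s `^ (1 - alpha).
  rewrite -powRD; last by apply/implyP => _; rewrite gt_eqF.
  by rewrite addrC subrK powRr1 // ltW.
have hy : y = y `^ alpha * y `^ (1 - alpha).
  rewrite -powRD; last by apply/implyP => _; rewrite gt_eqF.
  by rewrite addrC subrK powRr1 // ltW.
rewrite {1}hs {2}hy.
have h : s `^ (1 - alpha) <= y `^ (1 - alpha).
  by apply: ge0_ler_powR; rewrite ?subr_ge0 // nnegrE ltW.
have := mulr_ge0 (mulr_ge0 (powR_ge0 s alpha) (powR_ge0 y alpha)) (_ : 0 <= y `^ (1 - alpha) - s `^ (1 - alpha)).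
rewrite subr_ge0 h => /(_ isT) H.
nra.
Qed.

Lemma keyf (R : realType) (alpha c s yt yt1 : R) :
  0 < alpha < 1 -> 0 <= c -> 0 < s -> 0 < yt -> 0 < yt1 ->
  yt1 - yt <= c * yt1 `^ alpha ->
  minr 1 ((s - c * s `^ alpha) / yt) <= minr 1 (s / yt1).
Proof.
move=> /andP[a0 a1] c0 s0 y0 y10 hy.
have [sy|sy] := leP yt1 s.
  rewrite (_ : minr 1 (s / yt1) = 1); first by rewrite ge_min lexx.
  by apply/min_idPl; rewrite ler_pdivlMr // mul1r.
rewrite le_min ge_min lexx /= ge_min; apply/orP; right.
rewrite ler_pdivrMr // mulrAC ler_pdivlMr //.
have hsw : s * yt1 `^ alpha <= s `^ alpha * yt1.
  by apply: powR_swap => //; [exact: ltW | rewrite !ltW].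
have h1 : s * (yt1 - yt) <= s * (c * yt1 `^ alpha) by apply: ler_wpM2l => //; rewrite ltW.
have h2 : c * (s * yt1 `^ alpha) <= c * (s `^ alpha * yt1) by apply: ler_wpM2l.
nra.
Qed.

Lemma sum_step (R : realType) (kap w : R) : 0 < kap -> kap <= w ->
  (w ^+ 2)^-1 + 2 / (kap * (w + kap)) <= 2 / (kap * w).
Proof.
move=> k0 kw.
have w0 : 0 < w by apply: lt_le_trans kw.
have e : 2 / (kap * w) - ((w ^+ 2)^-1 + 2 / (kap * (w + kap))) = (w - kap) / (w ^+ 2 * (w + kap)).
  field; apply/and3P; split; rewrite ?gt_eqF //; by rewrite addr_gt0.
rewrite -subr_ge0 e divr_ge0 // ?subr_ge0 //.
by rewrite mulr_ge0 // ?exprn_ge0 ?addr_ge0 // ltW.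
Qed.

Lemma sum2 (R : realType) (a kap : R) n : 1 <= a -> 0 < kap -> kap <= 1 ->
  \sum_(t < n) ((a + kap * t%:R) ^+ 2)^-1 + 2 / (kap * (a + kap * n%:R))
    <= 2 / (kap * a).
Proof.
move=> a1 k0 k1; elim: n => [|n IH].
  by rewrite big_ord0 add0r mulr0 addr0.
rewrite big_ord_recr /=.
apply: le_trans IH; rewrite -addrA lerD2l.
have -> : a + kap * n.+1%:R = (a + kap * n%:R) + kap by rewrite -addn1 natrD; ring.
apply: sum_step => //.
have : 0 <= kap * n%:R by rewrite mulr_ge0 // ltW.
lra.
Qed.

Lemma sum_bound (R : realType) (a kap : R) q n : 1 <= a -> 0 < kap -> kap <= 1 ->
  \sum_(t < n) ((a + kap * t%:R) ^+ q.+2)^-1 <= 2 / (kap * a ^+ q.+1).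
Proof.
move=> a1 k0 k1.
have a0 : 0 < a by apply: lt_le_trans a1.
have aq0 : 0 < a ^+ q by apply: exprn_gt0.
apply: le_trans (_ : \sum_(t < n) ((a ^+ q)^-1 * ((a + kap * t%:R) ^+ 2)^-1) <= _).
  apply: ler_sum => t _.
  have ht : a <= a + kap * t%:R by rewrite lerDl mulr_ge0 // ltW.
  have ht0 : 0 < a + kap * t%:R by apply: lt_le_trans ht.
  have hle : a ^+ q * (a + kap * t%:R) ^+ 2 <= (a + kap * t%:R) ^+ q.+2.
    rewrite [in X in _ <= X](_ : q.+2 = q + 2)%N; last by rewrite addn2.
    rewrite exprD.
    apply: ler_wpM2r; first by rewrite exprn_ge0 // ltW.
    by apply: (lerXn2r q); rewrite ?nnegrE; [exact: ltW | exact: ltW | exact: ht].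
  rewrite -invfM lef_pV2 // posrE; first exact: exprn_gt0.
  by rewrite mulr_gt0 // exprn_gt0.
rewrite -mulr_sumr.
have := @sum2 R a kap n a1 k0 k1.
have h0 : 0 <= 2 / (kap * (a + kap * n%:R)).
  have : 0 <= kap * n%:R by rewrite mulr_ge0 // ltW.
  move=> hk; rewrite divr_ge0 // mulr_ge0 //; [exact: ltW | lra].
move=> H.
apply: le_trans (_ : (a ^+ q)^-1 * (2 / (kap * a)) <= _).
  apply: ler_wpM2l; first by rewrite invr_ge0 ltW.
  lra.
rewrite exprS le_eqVlt; apply/orP; left; apply/eqP; field.
by apply/and3P; split; rewrite ?gt_eqF.
Qed.

Lemma mfmin (R : realType) (dX : measure_display) (X : measurableType dX)
  (V : X -> R) (mV : measurable_fun setT V) (yt : R) :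
  measurable_fun setT (fun y => (minr 1 (V y / yt))%:E).
Proof.
apply/measurable_EFinP.
have -> : (fun y => minr 1 (V y / yt)) = (cst 1) \min (V \* cst yt^-1) by [].
apply: measurable_minr; first exact: measurable_cst.
by apply: measurable_funM => //; exact: measurable_cst.
Qed.

Lemma pw (R : realType) (dX : measure_display) (X : measurableType dX)
  (mu : probability X R) (V : X -> R) (mV : measurable_fun setT V)
  (V1 : forall x, 1 <= V x) (d yt : R) (yt0 : 0 < yt)
  (hd : (\int[mu]_y (V y)%:E <= d%:E)%E) :
  (\int[mu]_y (minr 1 (V y / yt))%:E <= (minr 1 (d / yt))%:E)%E.
Proof.
have fge0 : forall y, 0 <= minr 1 (V y / yt).
  move=> y; rewrite le_min ler01 /= divr_ge0 //; last exact: ltW.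
  exact: le_trans ler01 (V1 y).
have h1 : (\int[mu]_y (minr 1 (V y / yt))%:E <= 1)%E.
  apply: le_trans (_ : (\int[mu]_y (cst 1%E) y <= _)%E).
    apply: ge0_le_integral => //.
    - by move=> y _; rewrite lee_fin.
    - exact: mfmin.
    - by move=> y _; rewrite lee_fin ge_min lexx.
  by rewrite integral_cst // mul1e; apply: probability_le1.
have h2 : (\int[mu]_y (minr 1 (V y / yt))%:E <= (d / yt)%:E)%E.
  apply: le_trans (_ : (\int[mu]_y ((yt^-1)%:E * (V y)%:E) <= _)%E).
    apply: ge0_le_integral => //.
    - by move=> y _; rewrite lee_fin.
    - exact: mfmin.
    - apply: emeasurable_funM; first exact: measurable_cst.
      exact/measurable_EFinP.
    - by move=> y _; rewrite -EFinM lee_fin ge_min mulrC lexx orbT.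
  rewrite ge0_integralZl //.
  - rewrite mulrC EFinM; apply: lee_wpmul2l => //.
    by rewrite lee_fin invr_ge0 ltW.
  - exact/measurable_EFinP.
  - by move=> y _; rewrite lee_fin (le_trans ler01 (V1 y)).
  - by rewrite lee_fin invr_ge0 ltW.
rewrite EFin_min le_min h2 andbT; exact: h1.
Qed.

Section mix.
Context (R : realType) (dO dX : measure_display) (O : measurableType dO)
  (X : measurableType dX) (Pr : probability O R) (k : O -> probability X R)
  (mk : forall U, measurable U -> measurable_fun [set: O] (fun w => k w U)).

Definition lk (_ : unit) : {measure set O -> \bar R} := Pr.
Let mlk U : measurable U -> measurable_fun [set: unit] (lk ^~ U).
Proof. by move=> _; exact: measurable_cst. Qed.
HB.instance Definition _ := isKernel.Build _ _ _ _ _ lk mlk.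
Let lk1 x : lk x [set: O] = 1%E.
Proof. exact: probability_setT. Qed.
HB.instance Definition _ := Kernel_isProbability.Build _ _ _ _ _ lk lk1.

Definition kk (p : unit * O) : {measure set X -> \bar R} := k p.2.
Let mkk U : measurable U -> measurable_fun [set: unit * O] (kk ^~ U).
Proof.
move=> mU; have := measurableT_comp (mk _ mU) (@measurable_snd _ _ Datatypes_unit__canonical__measurable_structure_SigmaRing O); exact.
Qed.
HB.instance Definition _ := isKernel.Build _ _ _ _ _ kk mkk.
Let kk1 x : kk x [set: X] = 1%E.
Proof. exact: probability_setT. Qed.
HB.instance Definition _ := Kernel_isProbability.Build _ _ _ _ _ kk kk1.

Lemma mix_integral (Y : O -> X) (mY : measurable_fun [set: O] Y)
  (hY : forall A, measurable A -> Pr (Y @^-1` A) = (\int[Pr]_w k w A)%E)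
  (f : X -> \bar R) (f0 : forall x, (0 <= f x)%E)
  (mf : measurable_fun [set: X] f) :
  (\int[Pr]_w f (Y w) = \int[Pr]_w \int[k w]_y f y)%E.
Proof.
have := @integral_kcomp _ _ _ _ _ _ R lk kk tt f f0 mf.
rewrite /= => <-.
rewrite (@eq_measure_integral _ _ _ _ (pushforward Pr Y)); last first.
  by move=> A mA _; symmetry; exact: hY.
by rewrite ge0_integral_pushforward.
Qed.
End mix.

Lemma NcumS lag j : Ncum lag j.+1 = (Ncum lag j + lag j.+1)%N.
Proof. by rewrite /Ncum big_nat_recr. Qed.

Lemma Ncum_find lag (hl : forall k, (0 < lag k.+1)%N) j :
  exists i, (Ncum lag i <= j < Ncum lag i.+1)%N.
Proof.
elim: j => [|j [i /andP[h1 h2]]].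
  by exists 0%N; rewrite NcumS /Ncum big_geq // add0n hl.
have [h|h] := ltnP j.+1 (Ncum lag i.+1).
  by exists i; rewrite h andbT (leq_trans h1).
exists i.+1; have e : Ncum lag i.+1 = j.+1 by apply/eqP; rewrite eqn_leq h h2.
by rewrite e leqnn /= NcumS e -addn1 leq_add2l hl.
Qed.

Lemma exponent (R : realType) (alpha : R) : 2 / 3 < alpha -> alpha < 1 ->
  exists r : nat, r.+1%:R <= r.+2%:R * alpha /\ (2 * alpha - 1) * r.+2%:R <= r.+1%:R.
Proof.
move=> a23 a1.
set x := (2 - 2 * alpha)^-1.
have d0 : 0 < 2 - 2 * alpha by lra.
have hx : x * (2 - 2 * alpha) = 1 by rewrite mulVf // gt_eqF.
have x0 : 0 <= x by rewrite invr_ge0 ltW.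
have x1 : 1 <= x.
  rewrite -[leLHS]hx; have : 2 - 2 * alpha <= 1 by lra.
  move=> h; rewrite -{2}(mulr1 x) ler_wpM2l //.
have /andP[t1 t2] := truncn_itv x0.
set q := Num.Def.trunc x in t1 t2.
have q1 : (1 <= q)%N by rewrite truncn_ge_nat // (le_trans _ x1).
exists q.-1.
rewrite prednK //.
have e2 : q.+1%:R = q%:R + 1 :> R by rewrite -addn1 natrD.
rewrite e2.
have hq1 : q%:R * (2 - 2 * alpha) <= 1.
  by have := ler_wpM2r (ltW d0) t1; rewrite hx.
have hq2 : 1 <= (q%:R + 1) * (2 - 2 * alpha).
  by have := ler_wpM2r (ltW d0) (ltW t2); rewrite hx e2.
split; nra.
Qed.

Lemma onestep (R : realType) (dX dG dO : measure_display)
  (X : measurableType dX) (G : measurableType dG) (O : measurableType dO)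
  (P : G -> X -> probability X R) (lag : nat -> nat)
  (Pr : probability O R) (F : nat -> set (set O))
  (Xs : nat -> O -> X) (gs : nat -> O -> G) (x0 : X) (g0 : G)
  (hP : kernel_family_measurable P) (hlag : forall k, (0 < lag k.+1)%N)
  (hA : AirMCMC P lag Pr F Xs gs x0 g0)
  (V : X -> R) (mV : measurable_fun setT V) (V1 : forall x, 1 <= V x)
  (c alpha b K : R) (C : set X)
  (drift : simultaneous_poly_drift P V c alpha b C)
  (hK : forall x, C x -> V x <= K) (a0 : 0 < alpha) (a1 : alpha < 1) (c0 : 0 <= c)
  (yt yt1 : R) (yt0 : 0 < yt) (yt10 : 0 < yt1) (hg : yt1 - yt <= c * yt1 `^ alpha)
  (j : nat) :
  (\int[Pr]_w (minr 1 (V (Xs j.+1 w) / yt))%:E <=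
   \int[Pr]_w (minr 1 (V (Xs j w) / yt1))%:E + ((`|K| + `|b|) / yt)%:E)%E.
Proof.
have [i hi] := @Ncum_find lag hlag j.
case: hA => hsub [_ [hXm [hgm [_ [_ hstep]]]]].
have mX n : measurable_fun setT (Xs n).
  by move=> _ A mA; rewrite setTI; exact: (hsub n).2 _ (hXm n A mA).
have mg n : measurable_fun setT (gs n).
  by move=> _ A mA; rewrite setTI; exact: (hsub n).2 _ (hgm n A mA).
pose k := fun w => P (gs (Ncum lag i) w) (Xs j w).
have mk : forall U, measurable U -> measurable_fun setT (fun w => k w U).
  move=> U mU.
  exact: (measurableT_comp (hP U mU) (measurable_fun_pair (mX j) (mg (Ncum lag i)))).
have FT : F j setT.
  by case: (hsub j) => -[h0 hD _] _; rewrite -(setD0 setT); exact: hD.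
have hY : forall A, measurable A -> Pr (Xs j.+1 @^-1` A) = (\int[Pr]_w k w A)%E.
  by move=> A mA; have := hstep i j hi A mA setT FT; rewrite setTI.
have fge0 : forall yy y, 0 <= minr 1 (V y / yy) -> (0 <= (minr 1 (V y / yy))%:E)%E.
  by move=> yy y; rewrite lee_fin.
have fg0 : forall yy y, 0 < yy -> 0 <= minr 1 (V y / yy).
  move=> yy y yy0; rewrite le_min ler01 /= divr_ge0 //; last exact: ltW.
  exact: le_trans ler01 (V1 y).
rewrite (@mix_integral R dO dX O X Pr k mk (Xs j.+1) (mX j.+1) hY
  (fun y => (minr 1 (V y / yt))%:E)); last 2 first.
- by move=> y; rewrite lee_fin fg0.
- exact: mfmin.
set B := `|K| + `|b|.
have B0 : 0 <= B by rewrite addr_ge0.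
have Byt : 0 <= B / yt by rewrite divr_ge0 // ltW.
apply: le_trans (_ : (\int[Pr]_w (minr 1 (V (Xs j w) / yt1) + B / yt)%:E <= _)%E).
  apply: ge0_le_integral => //.
  - by move=> w _; apply: integral_ge0 => y _; rewrite lee_fin fg0.
  - apply: measurable_fun_integral_kernel; first exact: mk.
    + by move=> y; rewrite lee_fin fg0.
    + exact: mfmin.
  - apply/measurable_EFinP; apply: measurable_funD; last exact: measurable_cst.
    have := @mfmin R dO O (V \o Xs j) (measurableT_comp mV (mX j)) yt1.
    by move/measurable_EFinP.
  - move=> w _.
    set x := Xs j w; set ga := gs (Ncum lag i) w.
    pose d := V x - c * V x `^ alpha + b * (\1_C x : R).
    apply: le_trans (@pw R dX X (P ga x) V mV V1 _ yt yt0 (drift ga x)) _.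
    rewrite lee_fin.
    have [Cx|nCx] := pselect (C x).
    + have -> : (\1_C x : R) = 1 by rewrite indicE mem_set.
      have hB : V x - c * V x `^ alpha + b * 1 <= B.
        have := hK x Cx; have := powR_ge0 (V x) alpha.
        have := ler_norm K; have := ler_norm b.
        move=> h1 h2 h3 h4; rewrite /B mulr1.
        have : 0 <= c * V x `^ alpha by rewrite mulr_ge0.
        lra.
      apply: le_trans (_ : B / yt <= _); last first.
        by rewrite lerDr; apply: fg0.
      rewrite ge_min; apply/orP; right.
      by rewrite ler_pM2r // invr_gt0.
    + have -> : (\1_C x : R) = 0 by rewrite indicE memNset.
      rewrite mulr0 addr0.
      apply: le_trans (_ : minr 1 (V x / yt1) <= _); last by rewrite lerDl.
      apply: keyf => //; first by rewrite a0 a1.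
      exact: lt_le_trans ltr01 (V1 x).
have mf1 : measurable_fun setT (fun w => (minr 1 (V (Xs j w) / yt1))%:E).
  exact: (@mfmin R dO O (V \o Xs j) (measurableT_comp mV (mX j)) yt1).
under eq_integral do rewrite EFinD.
rewrite ge0_integralD //; last by move=> w _; rewrite lee_fin fg0.
rewrite leeD2l // integral_cst //.
rewrite -[X in (_ <= X)%E]mule1; apply: lee_wpmul2l; first by rewrite lee_fin.
exact: probability_le1.
Qed.

Lemma airX_meas (R : realType) (dX dG dO : measure_display)
  (X : measurableType dX) (G : measurableType dG) (O : measurableType dO)
  (P : G -> X -> probability X R) (lag : nat -> nat)
  (Pr : probability O R) (F : nat -> set (set O))
  (Xs : nat -> O -> X) (gs : nat -> O -> G) (x0 : X) (g0 : G)
  (hA : AirMCMC P lag Pr F Xs gs x0 g0) n : measurable_fun setT (Xs n).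
Proof.
case: hA => hsub [_ [hXm _]].
by move=> _ A mA; rewrite setTI; exact: (hsub n).2 _ (hXm n A mA).
Qed.

Theorem mainTheorem14 (R : realType) (dX dG : measure_display)
  (X : measurableType dX) (G : measurableType dG)
  (P : G -> X -> probability X R) (pi : probability X R)
  (C : set X) (delta : R) (nu : probability X R)
  (V : X -> R) (c alpha b : R) (lag : nat -> nat) :
  kernel_family_measurable P ->
  assumptionA P pi C delta nu ->
  (forall x, 1 <= V x) -> measurable_fun setT V ->
  0 < c ->
  2 / 3 < alpha -> alpha < 1 ->
  simultaneous_poly_drift P V c alpha b C ->
  (exists K : R, forall x, C x -> V x <= K) ->
  (forall k, (0 < lag k.+1)%N) ->
  exists M : R,
    forall (dO : measure_display) (O : measurableType dO) (Pr : probability O R)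
      (F : nat -> set (set O)) (Xs : nat -> O -> X) (gs : nat -> O -> G)
      (x0 : X) (g0 : G),
    AirMCMC P lag Pr F Xs gs x0 g0 ->
    forall (n : nat) (m : R), (0 < n)%N -> M <= m ->
      (Pr [set w | (m < V (Xs n w) `^ (2 * alpha - 1))%R]
        <= (M * V x0 * ln (1 + m) / m)%:E)%E.
Proof.
move=> hP _ V1 mV c0 a23 a1 drift [K hK] hlag.
have a0 : 0 < alpha by lra.
have [r [hr1 hr2]] := @exponent R alpha a23 a1.
set kap := minr 1 (c / r.+2%:R).
have r20 : 0 < r.+2%:R :> R by rewrite ltr0n.
have kap0 : 0 < kap by rewrite lt_min ltr01 /= divr_gt0.
have kap1 : kap <= 1 by rewrite ge_min lexx.
have kapc : kap * r.+2%:R <= c.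
  apply: le_trans (_ : (c / r.+2%:R) * r.+2%:R <= c); last by rewrite divfK // gt_eqF.
  by apply: ler_wpM2r; [exact: ltW | rewrite ge_min lexx orbT].
set B := `|K| + `|b|.
have B0 : 0 <= B by rewrite addr_ge0.
exists (maxr (expR 1) (1 + 2 * B / kap)).
move=> dO O Pr F Xs gs x0 g0 hAir n m _ hm.
set M := maxr (expR 1) (1 + 2 * B / kap) in hm *.
have e1 : 2 <= expR 1 :> R by have := expR_ge1Dx (1 : R); rewrite (_ : 1 + 1 = 2 :> R) //.
have mge : expR 1 <= m by apply: le_trans hm; rewrite le_max lexx.
have m1 : 1 <= m by apply: le_trans mge; apply: le_trans e1; rewrite ler1n.
have m0 : 0 < m by apply: lt_le_trans m1.
set e := (r.+1%:R : R)^-1.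
have r10 : 0 < r.+1%:R :> R by rewrite ltr0n.
set a := m `^ e.
have am : a ^+ r.+1 = m.
  rewrite /a -powR_mulrn ?powR_ge0 // -powRrM /e mulVf ?gt_eqF //.
  by rewrite powRr1 // ltW.
have a1' : 1 <= a.
  rewrite /a; have := ge0_ler_powR (_ : 0 <= e) _ _ m1.
  by rewrite powR1 => ->; rewrite // ?invr_ge0 ?ltW // nnegrE ?ler01 // ltW.
have a0' : 0 < a by apply: lt_le_trans a1'.
set y := fun t : nat => (a + kap * t%:R) ^+ r.+2.
have yge t : a ^+ r.+2 <= y t.
  have kt : 0 <= kap * t%:R by rewrite mulr_ge0 // ltW.
  apply: (lerXn2r r.+2); rewrite ?nnegrE.
  - exact: ltW.
  - by rewrite addr_ge0 // ltW.
  - by rewrite lerDl.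
have y0 t : 0 < y t by apply: lt_le_trans (yge t); exact: exprn_gt0.
have hg t : y t.+1 - y t <= c * (y t.+1) `^ alpha.
  exact: (@growth R alpha c kap a r.+1 t a0 a1' kap0 kapc hr1).
have core : forall k j,
  (\int[Pr]_w (minr 1 (V (Xs (k + j)%N w) / y 0%N))%:E <=
   \int[Pr]_w (minr 1 (V (Xs j w) / y k))%:E + (B * \sum_(t < k) (y t)^-1)%:E)%E.
  elim=> [|k IH] j.
    by rewrite add0n big_ord0 mulr0 adde0.
  rewrite addSn -addnS; apply: le_trans (IH j.+1) _.
  have := @onestep R dX dG dO X G O P lag Pr F Xs gs x0 g0 hP hlag hAir V mV V1
    c alpha b K C drift hK a0 a1 (ltW c0) (y k) (y k.+1) (y0 k) (y0 k.+1) (hg k) j.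
  move=> h; apply: le_trans (leeD2r _ h) _.
  rewrite -addeA -EFinD big_ord_recr /= mulrDr.
  by rewrite (addrC (_ / y k)).
set be := 2 * alpha - 1.
have mXn := @airX_meas R dX dG dO X G O P lag Pr F Xs gs x0 g0 hAir n.
have mg : measurable_fun setT (fun x => V x `^ be) := measurableT_comp (measurable_powR be) mV.
set S := [set w | m < V (Xs n w) `^ be].
have mS : measurable S.
  have -> : S = ((fun x => V x `^ be) \o Xs n) @^-1` `]m, +oo[%classic.
    by apply/seteqP; split=> w /=; rewrite in_itv /= andbT.
  have := measurableT_comp mg mXn measurableT (measurable_itv `]m, +oo[).
  by rewrite setTI.
have fg0 : forall yy v : R, 0 < yy -> 1 <= v -> 0 <= minr 1 (v / yy).
  move=> yy v yy0 v1; rewrite le_min ler01 /= divr_ge0 //; last exact: ltW.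
  exact: le_trans ler01 v1.
have hev : forall w, S w -> y 0%N <= V (Xs n w).
  move=> w Sw; set v := V (Xs n w) in Sw *.
  have v1 : 1 <= v := V1 _.
  have v0 : 0 <= v by apply: le_trans v1.
  rewrite /y mulr0 addr0 /a -powR_mulrn ?powR_ge0 // -powRrM.
  have ex0 : 0 <= e * r.+2%:R by rewrite mulr_ge0 // ?invr_ge0 ltW.
  apply: le_trans (_ : (v `^ be) `^ (e * r.+2%:R) <= _).
    by apply: ge0_ler_powR; rewrite ?nnegrE ?powR_ge0 // ?ltW.
  rewrite -powRrM.
  rewrite -[X in _ <= X](powRr1 v0).
  apply: ler_powR => //.
  rewrite mulrA /e -[X in _ <= X](mulfV (lt0r_neq0 r10)).
  by rewrite mulrAC ler_pM2r ?invr_gt0 //; exact: hr2.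
have hPS : (Pr S <= \int[Pr]_w (minr 1 (V (Xs n w) / y 0%N))%:E)%E.
  rewrite -[S]setIT -integral_indic //.
  apply: ge0_le_integral => //.
  - by apply/measurable_EFinP; exact: measurable_indic.
  - exact: (@mfmin R dO O (V \o Xs n) (measurableT_comp mV mXn) (y 0%N)).
  - move=> w _; rewrite lee_fin indicE.
    case: (boolP (w \in S)) => [/set_mem Sw|_].
      by rewrite le_min lexx /= ler_pdivlMr // mul1r; exact: hev.
    by rewrite fg0.
apply: le_trans hPS _.
have := core n 0%N; rewrite addn0 => h; apply: le_trans h _.
have hX0 : forall w, Xs 0%N w = x0 by case: hAir => _ [_ [_ [_ [h0 _]]]].
have u1 : 1 <= V x0 := V1 x0.
have hI : (\int[Pr]_w (minr 1 (V (Xs 0%N w) / y n))%:E <= (minr 1 (V x0 / y n))%:E)%E.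
  under eq_integral do rewrite hX0.
  rewrite integral_cst //.
  rewrite -[X in (_ <= X)%E]mule1; apply: lee_wpmul2l; first by rewrite lee_fin fg0.
  exact: probability_le1.
apply: le_trans (leeD2r _ hI) _.
rewrite -EFinD lee_fin.
have my : m <= y n.
  apply: le_trans (yge n); rewrite exprS am.
  by rewrite -[X in X <= _]mul1r; apply: ler_wpM2r => //; exact: ltW.
have h1 : minr 1 (V x0 / y n) <= V x0 * m^-1.
  rewrite ge_min; apply/orP; right.
  apply: ler_wpM2l; first by apply: le_trans u1.
  by rewrite lef_pV2 ?posrE.
have h2 : \sum_(t < n) (y t)^-1 <= 2 / (kap * m).
  by rewrite -am; apply: (@sum_bound R a kap r n a1' kap0 kap1).
have L1 : 1 <= ln (1 + m).
  rewrite -[X in X <= _](expRK 1) ler_ln ?posrE ?expR_gt0 //; last by rewrite addr_gt0.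
  by apply: le_trans mge _; rewrite lerDr.
set D := 2 * B / kap.
have D0 : 0 <= D by rewrite /D divr_ge0 // ?mulr_ge0 // ltW.
have MD : 1 + D <= M by rewrite /M le_max lexx orbT.
have eD : B * (2 / (kap * m)) = D * m^-1.
  by rewrite /D; field; apply/andP; split; rewrite gt_eqF.
apply: le_trans (_ : V x0 * m^-1 + D * m^-1 <= _).
  rewrite -eD; apply: lerD => //; apply: ler_wpM2l => //.
rewrite -mulrDl; apply: ler_wpM2r; first by rewrite invr_ge0 ltW.
have u0 : 0 <= V x0 by apply: le_trans u1.
have M0 : 0 <= M by apply: le_trans MD; rewrite addr_ge0.
have : (1 + D) * V x0 <= M * V x0 by apply: ler_wpM2r.
have : M * V x0 <= M * V x0 * ln (1 + m).
  by rewrite -[X in X <= _]mulr1; apply: ler_wpM2l => //; rewrite mulr_ge0.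
nra.
Qed.
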